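(* Let $n\ge1$ and let $\pi$ be uniformly distributed on $\mathcal S_n$. Then there exists a random permutation $\sigma\in\mathcal S_n$, which is a (bijective) deterministic function of $\pi$ and hence uniformly distributed on $\mathcal S_n$, such that with the one-cycle permutation $\sigma^*:=(\pi(1),\pi(2),\dots,\pi(n))_{\rm c}\in\mathcal S_n^*$, \[ \mathbb{E}\,\#\{i\in\{1,\dots,n\}:\sigma(i)\ne\sigma^*(i)\}\le\sum_{j=1}^n j^{-1}\le1+\log(n). \]
   Context: $\mathcal S_n$ denotes the set of permutations of $\{1,\dots,n\}$. For pairwise distinct $a_1,\dots,a_m\in\{1,\dots,n\}$, $(a_1,\dots,a_m)_{\rm c}$ denotes the cycle mapping $a_1\mapsto a_2\mapsto\cdots\mapsto a_m\mapsto a_1$ and fixing all other points. $\mathcal S_n^*$ is the set of permutations consisting of a single cycle of length $n$. *)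

(* Defs.v *)
From mathcomp Require Import all_boot all_order all_algebra all_fingroup.
From mathcomp Require Import all_classical all_reals all_analysis.
Set Implicit Arguments. Unset Strict Implicit. Unset Printing Implicit Defensive.

(* Points 1..n are represented by 'I_n = {0,...,n-1} (point k+1 <-> k).
   one_cycle p is the cycle (p(1), p(2), ..., p(n))_c, i.e. the permutation
   mapping p k to p (k+1 mod n), written x |-> p (ordS ((p^-1)%g x)). *)
Lemma one_cycle_inj n (p : {perm 'I_n}) :
  injective (fun x : 'I_n => p (ordS ((p^-1)%g x))).
Proof.
move=> x y /perm_inj /ordS_inj /perm_inj //.
Qed.

Definition one_cycle n (p : {perm 'I_n}) : {perm 'I_n} :=
  perm (@one_cycle_inj n p).

(* Main.v *)
Require Import Defs.
From mathcomp Require Import all_boot all_order all_algebra all_fingroup.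
From mathcomp Require Import all_classical all_reals all_analysis.
From mathcomp Require Import zify ring lra.
Set Implicit Arguments. Unset Strict Implicit. Unset Printing Implicit Defensive.

Section Foata.
Variable n : nat.
Implicit Types (p q : {perm 'I_n}) (k j i : 'I_n).

Definition PP p k j : bool :=
  (j <= k) && [forall i : 'I_n, (i <= k) ==> (p i <= p j)].
Definition recp p k := PP p k k.

Lemma PP_exists p k : exists j, PP p k j.
Proof.
have : (0 < #|[pred i : 'I_n | i <= k]|) by apply/card_gt0P; exists k; rewrite inE /=.
move=> /(eq_bigmax_cond (fun i => nat_of_ord (p i))) [j jk Hj].
exists j; apply/andP; split => //; apply/forallP => i; apply/implyP => ik.
rewrite -Hj; exact: (@leq_bigmax_cond _ [pred i : 'I_n | i <= k] (fun i => nat_of_ord (p i)) i ik).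
Qed.

Lemma PP_uniq p k j1 j2 : PP p k j1 -> PP p k j2 -> j1 = j2.
Proof.
move=> /andP[h1 /forallP f1] /andP[h2 /forallP f2].
have a := implyP (f1 j2) h2; have b := implyP (f2 j1) h1.
apply: (@perm_inj _ p); apply: val_inj; apply/eqP; rewrite eqn_leq a b.
by [].
Qed.

Definition am p k := odflt k [pick j | PP p k j].

Lemma amP p k : PP p k (am p k).
Proof.
rewrite /am; case: pickP => //= H; exfalso.
by have [j Hj] := PP_exists p k; rewrite H in Hj.
Qed.

Lemma rec_am p k : recp p (am p k).
Proof.
have /andP[ak /forallP f] := amP p k.
apply/andP; split => //; apply/forallP => i; apply/implyP => ia.
exact: (implyP (f i) (leq_trans ia ak)).
Qed.

Lemma rec0 p j : nat_of_ord j = 0 -> recp p j.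
Proof.
move=> j0; apply/andP; split => //; apply/forallP => i; apply/implyP.
rewrite j0 leqn0 => /eqP i0.
by have -> : i = j by apply: val_inj; rewrite /= i0 j0.
Qed.

Lemma ordS_val k : nat_of_ord (ordS k) = k.+1 \/ (nat_of_ord (ordS k) = 0 /\ k.+1 = n).
Proof.
rewrite /ordS /=; have := ltn_ord k; rewrite leq_eqVlt => /orP [/eqP e|lt].
  by right; rewrite e modnn.
by left; rewrite modn_small.
Qed.

Definition t p k := if recp p (ordS k) then am p k else ordS k.

Lemma t_aux p k1 k2 : k1 < k2 -> recp p (ordS k1) -> am p k1 = am p k2 -> False.
Proof.
move=> lt12 r1 E.
have v1 : nat_of_ord (ordS k1) = k1.+1.
  case: (ordS_val k1) => // [[_ e]]; have := ltn_ord k2; lia.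
have /andP[ak1 /forallP f1] := amP p k1.
have /andP[_ /forallP f2] := amP p k2.
move: r1 => /andP[_ /forallP g].
have a := implyP (g (am p k1)) ltac:(rewrite v1; lia).
have b := implyP (f2 (ordS k1)) ltac:(rewrite v1; lia).
rewrite -E in b.
have e : am p k1 = ordS k1.
  apply: (@perm_inj _ p); apply: val_inj; apply/eqP; rewrite eqn_leq a b //.
have := congr1 (@nat_of_ord n) e; rewrite v1; lia.
Qed.

Lemma t_inj p : injective (t p).
Proof.
move=> k1 k2; rewrite /t.
case r1: (recp p (ordS k1)); case r2: (recp p (ordS k2)).
- move=> E; case: (ltngtP k1 k2) => [lt|gt|eq].
  + by case: (t_aux lt r1 E).
  + by case: (t_aux gt r2 (esym E)).
  + exact: val_inj.
- by move=> E; have := rec_am p k1; rewrite E r2.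
- by move=> E; have := rec_am p k2; rewrite -E r1.
- exact: ordS_inj.
Qed.

Definition tp p : {perm 'I_n} := perm (@t_inj p).

Lemma F_inj p : injective (fun i => p (tp p ((p^-1)%g i))).
Proof. by move=> x y /perm_inj /perm_inj /perm_inj. Qed.

Definition F p : {perm 'I_n} := perm (@F_inj p).

Lemma FE p k : F p (p k) = p (t p k).
Proof. by rewrite /F permE permK /tp permE. Qed.

Lemma L p q k m : (forall j, k < j -> p j = q j) -> k <= m ->
  forall v, ((p^-1)%g v <= m) = ((q^-1)%g v <= m).
Proof.
move=> H km v.
case: (leqP ((p^-1)%g v) m) => H1; case: (leqP ((q^-1)%g v) m) => H2 //.
- have e : p ((q^-1)%g v) = v by rewrite H ?permKV // (leq_ltn_trans km H2).
  have : (p^-1)%g v = (q^-1)%g v by rewrite -{1}e permK.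
  by move=> e'; rewrite e' leqNgt H2 in H1.
- have e : q ((p^-1)%g v) = v by rewrite -H ?permKV // (leq_ltn_trans km H1).
  have : (q^-1)%g v = (p^-1)%g v by rewrite -{1}e permK.
  by move=> e'; rewrite e' leqNgt H1 in H2.
Qed.

Lemma forall_swap p x m :
  [forall i : 'I_n, (i <= m) ==> (p i <= x)] =
  [forall v : 'I_n, ((p^-1)%g v <= m) ==> (v <= x)].
Proof.
apply/forallP/forallP => H v.
- by have := H ((p^-1)%g v); rewrite permKV.
- by have := H (p v); rewrite permK.
Qed.

Lemma Lq p q k m x : (forall j, k < j -> p j = q j) -> k <= m ->
  [forall i : 'I_n, (i <= m) ==> (p i <= x)] =
  [forall i : 'I_n, (i <= m) ==> (q i <= x)].
Proof.
move=> H km; rewrite !forall_swap; apply: eq_forallb => v.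
by rewrite (L H km).
Qed.

Lemma am_le p q k : (forall j, k < j -> p j = q j) -> p (am p k) <= q (am q k).
Proof.
move=> H.
have /andP[ak _] := amP p k.
have /andP[_ /forallP f] := amP q k.
have h : (q^-1)%g (p (am p k)) <= k by rewrite -(L H (leqnn k)) permK.
by have := implyP (f _) h; rewrite permKV.
Qed.

Lemma key p q k : (forall j, k < j -> p j = q j) -> F p = F q -> p k = q k.
Proof.
move=> H E.
have H' : forall j, k < j -> q j = p j by move=> j kj; rewrite H.
apply: (@perm_inj _ (F p)); rewrite {2}E !FE.
suff amc : p (am p k) = q (am q k).
  rewrite /t; case: (ordS_val k) => [v|[v _]].
  + have kS : k < ordS k by rewrite v.
    have eS := H _ kS.
    have -> : recp q (ordS k) = recp p (ordS k).
      by rewrite /recp /PP eS (@Lq p q k (ordS k) (q (ordS k)) H (ltnW kS)).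
    by case: (recp p (ordS k)).
  + by rewrite !rec0.
apply: val_inj; apply/eqP; rewrite eqn_leq am_le // am_le //.
Qed.

Lemma F_injective : injective F.
Proof.
move=> p q E; apply/permP => k.
suff S : forall d (k0 : 'I_n), n <= k0 + d -> p k0 = q k0.
  by apply: (S n); rewrite leq_addl.
elim=> [|d IH] k0 Hk.
  by have := ltn_ord k0; rewrite addn0 in Hk; lia.
case: (leqP n (k0 + d)) => [/IH //|lt].
apply: key => // j kj; apply: IH; lia.
Qed.

Lemma cost p : #|[set i | F p i != one_cycle p i]| <= #|[set k | recp p k]|.
Proof.
rewrite -(card_imset _ (fun x y (e : ordS ((p^-1)%g x) = ordS ((p^-1)%g y)) =>
   perm_inj (ordS_inj e))).
apply: subset_leq_card; apply/fintype.subsetP => x /imsetP [i].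
rewrite inE => Hi ->; rewrite inE.
move: Hi; rewrite -{1}(permKV p i) FE /one_cycle permE /t.
by case: (recp _ _) => //; rewrite eqxx.
Qed.

Lemma swap_le p j k (x : nat) : j <= k -> (forall i : 'I_n, i <= k -> p i <= x) ->
  forall i : 'I_n, i <= k -> (tperm j k * p)%g i <= x.
Proof.
move=> jk H i ik; rewrite permM; apply: H.
by case: tpermP => [_|_|_ _].
Qed.

Lemma PP_to_k p j k : j <= k -> PP p k j -> PP (tperm j k * p)%g k k.
Proof.
move=> jk /andP[_ /forallP f]; apply/andP; split=> //; apply/forallP => i.
apply/implyP => ik; rewrite (permM (tperm j k) p k) tpermR.
by apply: (swap_le jk _ ik) => i' hi'; exact: (implyP (f i') hi').
Qed.

Lemma PP_to_j p j k : j <= k -> PP p k k -> PP (tperm j k * p)%g k j.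
Proof.
move=> jk /andP[_ /forallP f]; apply/andP; split=> //; apply/forallP => i.
apply/implyP => ik; rewrite (permM (tperm j k) p j) tpermL.
by apply: (swap_le jk _ ik) => i' hi'; exact: (implyP (f i') hi').
Qed.

Lemma card_le (A B : {set {perm 'I_n}}) (g : {perm 'I_n} -> {perm 'I_n}) :
  injective g -> (forall p, p \in A -> g p \in B) -> #|A| <= #|B|.
Proof.
move=> ginj H; rewrite -(card_imset A ginj).
by apply: subset_leq_card; apply/fintype.subsetP => x /imsetP [p pA ->]; apply: H.
Qed.

Lemma card_PP j k : j <= k -> #|[set p | PP p k j]| = #|[set p | PP p k k]|.
Proof.
move=> jk; apply/eqP; rewrite eqn_leq; apply/andP; split;
  apply: (@card_le _ _ (fun p => (tperm j k * p)%g)); try exact: mulgI;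
  move=> p; rewrite !inE; [exact: PP_to_k | exact: PP_to_j].
Qed.

Lemma sum_PP p k : \sum_(j : 'I_n) (PP p k j : nat) = 1.
Proof.
rewrite (bigD1 (am p k)) //= amP big1 ?addn0 // => j /negbTE ne.
case h: (PP p k j) => //.
by rewrite (PP_uniq h (amP p k)) eqxx in ne.
Qed.

Lemma card_ltk k : #|[pred j : 'I_n | j <= k]| = k.+1.
Proof.
have := @big_ord_widen_cond nat 0 addn k.+1 n predT (fun _ => 1) (ltn_ord k).
have e2 : \sum_(i < k.+1 | predT i) 1 = k.+1 by rewrite sum1_card card_ord.
rewrite e2 => ->.
rewrite -sum1_card; apply: eq_bigl => i; by rewrite inE /= ltnS.
Qed.

End Foata.

Lemma card_sum (T : finType) (P : pred T) : \sum_(x : T) (P x : nat) = #|[set x | P x]|.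
Proof.
rewrite -sum1_card [RHS]big_mkcond; apply: eq_bigr => x _; rewrite inE; by case: (P x).
Qed.

Lemma card_rec n (k : 'I_n) : #|[set p : {perm 'I_n} | recp p k]| * k.+1 = n`!.
Proof.
rewrite -card_Sn -[in RHS]sum1_card.
rewrite (eq_bigr (fun p => \sum_(j : 'I_n) (PP p k j : nat))); last first.
  by move=> p _; rewrite sum_PP.
rewrite exchange_big /=.
rewrite (eq_bigr (fun j => #|[set p | PP p k j]|)); last by move=> j _; rewrite -card_sum; apply: eq_bigl.
rewrite (bigID (fun j : 'I_n => j <= k)) /=.
rewrite [X in _ + X]big1 ?addn0; last first.
  move=> j /negbTE h; apply/eqP; rewrite cards_eq0; apply/eqP/setP => p.
  by rewrite !inE /PP h.
rewrite (eq_bigr (fun _ => #|[set p | PP p k k]|)); last by move=> j jk; rewrite card_PP.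
by rewrite sum_nat_const card_ltk mulnC.
Qed.

Import Order.TTheory GRing.Theory Num.Theory.
Local Open Scope ring_scope.


Lemma harm_ln (R : realType) (n : nat) : (1 <= n)%N ->
  \sum_(1 <= j < n.+1) (j%:R : R)^-1 <= 1 + ln (n%:R : R).
Proof.
elim: n => [//|n IH] _.
case: n IH => [_|n IH].
  by rewrite big_nat1 ln1 invr1 addr0.
rewrite big_nat_recr //=.
have H := IH isT.
suff H2 : (n.+2%:R : R)^-1 <= ln n.+2%:R - ln n.+1%:R.
  apply: le_trans (lerD H H2) _; lra.
have pos1 : (0 : R) < n.+1%:R by rewrite ltr0n.
have pos2 : (0 : R) < n.+2%:R by rewrite ltr0n.
have := @le_ln1Dx R (- (n.+2%:R)^-1).
have -> : 1 + - (n.+2%:R : R)^-1 = n.+1%:R * (n.+2%:R)^-1.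
  rewrite -[n.+2]addn1 natrD; field.
  by rewrite lt0r_neq0 //; have := ler0n R n; lra.
have e1 := @lnM R n.+1%:R (n.+2%:R)^-1 ltac:(by rewrite posrE) ltac:(by rewrite posrE invr_gt0).
have e2 := @lnV R n.+2%:R ltac:(by rewrite posrE).
rewrite /= in e1 e2. rewrite e1 e2.
have h3 : (0 : R) < (n.+2%:R)^-1 by rewrite invr_gt0.
have h4 : (n.+2%:R : R)^-1 < 1 by rewrite invf_lt1 // ltr1n.
move=> h; have h5 : (-1 : R) < - (n.+2%:R)^-1 by rewrite ltrN2.
have := h h5. move: (ln _) (ln _) ((n.+2%:R : R)^-1) => a b c. lra.
Qed.

Theorem mainTheorem6 (R : realType) (n : nat) (hn : (1 <= n)%N) :
  exists f : {perm 'I_n} -> {perm 'I_n},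
    bijective f /\
    (\sum_(p : {perm 'I_n}) (#|[set i | f p i != one_cycle p i]|)%:R)
        / (#|{perm 'I_n}|)%:R
      <= \sum_(1 <= j < n.+1) (j%:R : R)^-1 /\
    \sum_(1 <= j < n.+1) (j%:R : R)^-1 <= 1 + ln (n%:R : R).
Proof.
exists (@F n); split; first exact: injF_bij (@F_injective n).
split; last exact: harm_ln.
have c1 : \sum_(p : {perm 'I_n}) (#|[set i | F p i != one_cycle p i]|)%:R
    <= \sum_(p : {perm 'I_n}) (#|[set k | recp p k]|)%:R :> R.
  by apply: ler_sum => p _; rewrite ler_nat cost.
have c2 : \sum_(p : {perm 'I_n}) (#|[set k | recp p k]|)%:R
    = \sum_(k : 'I_n) (#|[set p : {perm 'I_n} | recp p k]|)%:R :> R.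
  rewrite -!natr_sum; congr (_%:R).
  rewrite (eq_bigr (fun p => \sum_(k : 'I_n) (recp p k : nat))); last first.
    by move=> p _; rewrite card_sum.
  by rewrite exchange_big /=; apply: eq_bigr => k _; rewrite card_sum.
have N0 : (0 : R) < (#|{perm 'I_n}|)%:R by rewrite card_Sn ltr0n fact_gt0.
have Ni : (0:R) <= ((#|{perm 'I_n}|)%:R)^-1 by rewrite invr_ge0 ltW.
have c3 := ler_wpM2r Ni c1.
rewrite /= in c3; apply: le_trans c3 _.
rewrite c2 mulr_suml big_add1 /= big_mkord le_eqVlt; apply/orP; left; apply/eqP.
apply: eq_bigr => k _.
have ck := card_rec k.
have cnz : (#|[set p : {perm 'I_n} | recp p k]| != 0)%N.
  by apply/eqP => c0; move: (fact_gt0 n); rewrite -ck c0 mul0n.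
rewrite card_Sn -ck natrM invfM mulrA mulfV ?mul1r //.
by rewrite pnatr_eq0.
Qed.
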